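(* Let $T_n(y)$ and $U_n(y)$ denote the Chebyshev polynomials of the first and second kind, extended to all integer indices. For all $x,y,r\in\mathbb{C}$ and all integers $c,n$ with $n\ge c$ (and $x\neq0$ if $c<0$), \[ \sum_{k=c}^n r^{n-k}x^k\big(rT_k(y)+(xy-r)U_k(y)\big)=x^{n+1}y\,U_n(y)-r^{n-c+1}x^c y\,U_{c-1}(y) \] and \[ \sum_{k=c}^n r^{n-k}x^k\big((y^2-1)r\,U_{k-2}(y)+(xy-r)T_k(y)\big)=x^{n+1}y\,T_n(y)-r^{n-c+1}x^c y\,T_{c-1}(y). \]
   Context: The Chebyshev polynomials are defined by $T_0(y)=1$, $T_1(y)=y$, $T_n(y)=2yT_{n-1}(y)-T_{n-2}(y)$ and $U_0(y)=1$, $U_1(y)=2y$, $U_n(y)=2yU_{n-1}(y)-U_{n-2}(y)$ for $n\ge 2$; they are extended to negative indices so that these recurrences hold for all integers $n$ (equivalently $T_{-n}(y)=T_n(y)$ and $U_{-n}(y)=2yU_{-(n-1)}(y)-U_{-(n-2)}(y)$, so $U_{-1}(y)=0$). *)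

(* Defs.v *)
From HB Require Import structures.
From mathcomp Require Import all_boot all_order all_algebra.
From mathcomp Require Import reals complex.
Set Implicit Arguments. Unset Strict Implicit. Unset Printing Implicit Defensive.
Import Order.TTheory GRing.Theory Num.Theory.
Local Open Scope ring_scope.

Section Cheb.
Variable R : pzRingType.

Fixpoint chebT_pair (y : R) (n : nat) : R * R :=
  match n with
  | 0%N => (1, y)
  | m.+1 => let: (a, b) := chebT_pair y m in (b, 2%:R * y * b - a)
  end.

Fixpoint chebU_pair (y : R) (n : nat) : R * R :=
  match n with
  | 0%N => (1, 2%:R * y)
  | m.+1 => let: (a, b) := chebU_pair y m in (b, 2%:R * y * b - a)
  end.

Definition chebT_nat (y : R) (n : nat) : R := (chebT_pair y n).1.
Definition chebU_nat (y : R) (n : nat) : R := (chebU_pair y n).1.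

(* Extension to integer indices: T_{-n} = T_n, and U_{-1} = 0,
   U_{-(m+2)} = - U_m (the unique extension satisfying the recurrence). *)
Definition chebT (n : int) (y : R) : R :=
  match n with
  | Posz m => chebT_nat y m
  | Negz m => chebT_nat y m.+1
  end.

Definition chebU (n : int) (y : R) : R :=
  match n with
  | Posz m => chebU_nat y m
  | Negz 0 => 0
  | Negz m.+1 => - chebU_nat y m
  end.
End Cheb.

(* Main.v *)
Require Import Defs.
From HB Require Import structures.
From mathcomp Require Import all_boot all_order all_algebra.
From mathcomp Require Import reals complex.
From mathcomp Require Import ring lra zify.
Import Order.TTheory GRing.Theory Num.Theory.
Local Open Scope ring_scope.

Section Aux.
Variable C : comNzRingType.

Lemma Tpair2 (y : C) m : (chebT_pair y m).2 = chebT_nat y m.+1.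
Proof. by rewrite /chebT_nat /=; case: (chebT_pair y m). Qed.
Lemma Upair2 (y : C) m : (chebU_pair y m).2 = chebU_nat y m.+1.
Proof. by rewrite /chebU_nat /=; case: (chebU_pair y m). Qed.

Lemma Trec (y : C) m :
  chebT_nat y m.+2 = 2%:R * y * chebT_nat y m.+1 - chebT_nat y m.
Proof.
rewrite -Tpair2 /= -[chebT_nat y m.+1]Tpair2 /chebT_nat /=.
by case: (chebT_pair y m).
Qed.
Lemma Urec (y : C) m :
  chebU_nat y m.+2 = 2%:R * y * chebU_nat y m.+1 - chebU_nat y m.
Proof.
rewrite -Upair2 /= -[chebU_nat y m.+1]Upair2 /chebU_nat /=.
by case: (chebU_pair y m).
Qed.

Lemma rec_uniq (y : C) (f g : nat -> C) :
  (forall j, f j.+2 = 2%:R * y * f j.+1 - f j) ->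
  (forall j, g j.+2 = 2%:R * y * g j.+1 - g j) ->
  f 0%N = g 0%N -> f 1%N = g 1%N -> forall j, f j = g j.
Proof.
move=> hf hg h0 h1 j.
have: f j = g j /\ f j.+1 = g j.+1.
  elim: j => [|j [IH1 IH2]]; first by [].
  by split=> //; rewrite hf hg IH1 IH2.
by case.
Qed.

Lemma T0 (y : C) : chebT_nat y 0 = 1. Proof. by []. Qed.
Lemma T1 (y : C) : chebT_nat y 1 = y. Proof. by []. Qed.
Lemma U0 (y : C) : chebU_nat y 0 = 1. Proof. by []. Qed.
Lemma U1 (y : C) : chebU_nat y 1 = 2%:R * y. Proof. by []. Qed.

Lemma N1 (y : C) j : chebT_nat y j.+1 = chebU_nat y j.+1 - y * chebU_nat y j.
Proof.
apply: (@rec_uniq y (fun j => chebT_nat y j.+1)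
   (fun j => chebU_nat y j.+1 - y * chebU_nat y j) _ _ _ _ j).
- by move=> k; rewrite Trec.
- by move=> k /=; rewrite !Urec; ring.
- by rewrite /= T1 U1 U0; ring.
- by rewrite /= Trec Urec T1 T0 U1 U0; ring.
Qed.

Lemma N2 (y : C) j :
  chebT_nat y j.+2 - y * chebT_nat y j.+1 = (y ^+ 2 - 1) * chebU_nat y j.
Proof.
apply: (@rec_uniq y (fun j => chebT_nat y j.+2 - y * chebT_nat y j.+1)
   (fun j => (y ^+ 2 - 1) * chebU_nat y j) _ _ _ _ j).
- by move=> k /=; rewrite !Trec; ring.
- by move=> k /=; rewrite !Urec; ring.
- by rewrite /= Trec T1 T0 U0; ring.
- by rewrite /= !Trec T1 T0 U1; ring.
Qed.

Lemma I1 (y : C) (k : int) : chebT k y = chebU k y - y * chebU (k - 1) y.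
Proof.
case: k => m.
- case: m => [|m]; first by rewrite /=; ring.
  have -> : (Posz m.+1 - 1 = Posz m) by lia.
  by rewrite /= N1.
- have -> : (Negz m - 1 = Negz m.+1) by lia.
  case: m => [|m] /=.
  + by rewrite T1 U0; ring.
  + by rewrite N1 Urec; ring.
Qed.

Lemma I2 (y : C) (k : int) :
  chebT k y - y * chebT (k - 1) y = (y ^+ 2 - 1) * chebU (k - 2) y.
Proof.
case: k => m.
- case: m => [|[|m]].
  + have -> : (Posz 0 - 1 = Negz 0) by lia.
    have -> : (Posz 0 - 2 = Negz 1) by lia.
    by rewrite /= T1 T0 U0; ring.
  + have -> : (Posz 1 - 1 = Posz 0) by lia.
    have -> : (Posz 1 - 2 = Negz 0) by lia.
    by rewrite /= T1 T0; ring.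
  + have -> : (Posz m.+2 - 1 = Posz m.+1) by lia.
    have -> : (Posz m.+2 - 2 = Posz m) by lia.
    by rewrite /= N2.
- have -> : (Negz m - 1 = Negz m.+1) by lia.
  have -> : (Negz m - 2 = Negz m.+2) by lia.
  rewrite /=.
  have := N2 y m.+1; rewrite Trec => h.
  have e : chebT_nat y m.+1 - y * chebT_nat y m.+2 =
     - (2%:R * y * chebT_nat y m.+2 - chebT_nat y m.+1 - y * chebT_nat y m.+2)
    by ring.
  by rewrite e h; ring.
Qed.

Lemma telesc (r : C) (f : nat -> C) m :
  \sum_(0 <= i < m.+1) (r ^+ (m - i) * f i.+1 - r ^+ (m - i).+1 * f i)
  = f m.+1 - r ^+ m.+1 * f 0%N.
Proof.
elim: m => [|m IH]; first by rewrite big_nat1 subn0 expr1 expr0 mul1r.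
rewrite big_nat_recr //= subnn expr0 mul1r expr1.
have -> : \sum_(0 <= i < m.+1) (r ^+ (m.+1 - i) * f i.+1 - r ^+ (m.+1 - i).+1 * f i)
   = r * \sum_(0 <= i < m.+1) (r ^+ (m - i) * f i.+1 - r ^+ (m - i).+1 * f i).
  rewrite big_distrr /=; apply: eq_big_nat => i /andP [_ hi].
  rewrite subSn // !exprS; ring.
rewrite IH (exprS r m.+1); ring.
Qed.

End Aux.

Theorem theorem11 (R : realType) (x y r : complex R) (c n : int) :
  c <= n -> (c < 0 -> x != 0) ->
  (\sum_(0 <= i < `|n - c|%N.+1)
      r ^+ (`|n - c|%N - i) * x ^ (c + i%:Z)
      * (r * chebT (c + i%:Z) y + (x * y - r) * chebU (c + i%:Z) y)
    = x ^ (n + 1) * y * chebU n y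
      - r ^+ (`|n - c|%N.+1) * x ^ c * y * chebU (c - 1) y)
  /\
  (\sum_(0 <= i < `|n - c|%N.+1)
      r ^+ (`|n - c|%N - i) * x ^ (c + i%:Z)
      * ((y ^+ 2 - 1) * r * chebU (c + i%:Z - 2) y + (x * y - r) * chebT (c + i%:Z) y)
    = x ^ (n + 1) * y * chebT n y
      - r ^+ (`|n - c|%N.+1) * x ^ c * y * chebT (c - 1) y).
Proof.
move=> hcn hx.
set N := `|n - c|%N.
have hN : c + N%:Z = n by rewrite /N; lia.
have xS : forall i : nat, x ^ (c + i%:Z + 1) = x ^ (c + i%:Z) * x.
  move=> i; case: (ltP c 0) => hc.
  - by rewrite exprzDr ?unitfE ?hx // expr1z.
  - by rewrite exprzD_ss ?expr1z //; apply/orP; left; apply/andP; split; lia.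
have xc : forall i : nat, c + i.+1%:Z - 1 = c + i%:Z by move=> i; lia.
have xc0 : c + 0%N%:Z - 1 + 1 = c by lia.
have xc1 : forall i : nat, c + i%:Z - 1 + 1 = c + i%:Z by move=> i; lia.
split.
- pose f (j : nat) := x ^ (c + j%:Z - 1 + 1) * y * chebU (c + j%:Z - 1) y.
  rewrite (@eq_big_nat _ _ _ 0 N.+1 _ (fun i => r ^+ (N - i) * f i.+1 - r ^+ (N - i).+1 * f i)); last first.
    move=> i _; rewrite /f.
    rewrite xc xc1 xS (@I1 _ y (c + i%:Z)) exprS; ring.
  rewrite telesc /f.
  have e1 : c + N.+1%:Z - 1 = n by lia.
  have e2 : c + 0%N%:Z - 1 = c - 1 by lia.
  have e3 : c - 1 + 1 = c by lia.
  rewrite e1 e2 e3; ring.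
- pose f (j : nat) := x ^ (c + j%:Z - 1 + 1) * y * chebT (c + j%:Z - 1) y.
  rewrite (@eq_big_nat _ _ _ 0 N.+1 _ (fun i => r ^+ (N - i) * f i.+1 - r ^+ (N - i).+1 * f i)); last first.
    move=> i _; rewrite /f.
    have h2 : (y ^+ 2 - 1) * r * chebU (c + i%:Z - 2) y
       = r * (chebT (c + i%:Z) y - y * chebT (c + i%:Z - 1) y)
      by rewrite (@I2 _ y (c + i%:Z)); ring.
    rewrite xc xc1 xS h2 exprS; ring.
  rewrite telesc /f.
  have e1 : c + N.+1%:Z - 1 = n by lia.
  have e2 : c + 0%N%:Z - 1 = c - 1 by lia.
  have e3 : c - 1 + 1 = c by lia.
  rewrite e1 e2 e3; ring.
Qed.
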